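(* On a 2-step nilmanifold $X=\Gamma\backslash G$ with abelian invariant complex structure $J$, let $\mu\in\mathfrak g^{*(0,1)}\otimes\mathfrak g^{1,0}$. Then $\mu$ generates an abelian deformation (in the sense of the context) if and only if $\overline\partial\mu=0$ and $\mu$ satisfies Condition A.
   Context: $\mathfrak g$ is the Lie algebra of $G$, real 2-step nilpotent with center $\mathfrak c$; $J$ abelian ($J^2=-1$, $[JA,JB]=[A,B]$); $\Gamma$ discrete co-compact. $\mathfrak t$ is a $J$-invariant complement of $\mathfrak c$ with real basis $\{X_j,JX_j\}_{1\le j\le n}$; $\{Z_\alpha,JZ_\alpha\}_{n+1\le\alpha\le n+m}$ real basis of $\mathfrak c$; $T_j=\frac12(X_j-iJX_j)$, $W_\alpha=\frac12(Z_\alpha-iJZ_\alpha)$ basis of $\mathfrak g^{1,0}$; $[\overline T_k,T_j]=\sum_\alpha E^\alpha_{kj}W_\alpha+\sum_\alpha F^\alpha_{kj}\overline W_\alpha$, $F^\alpha_{kj}=-\overline{E^\alpha_{jk}}$. $\{\omega^p\}$ dual $(1,0)$-basis; $\mu=\sum\mu^i_j\overline\omega^j\otimes T_i+\sum\mu^i_\alpha\overline\omega^\alpha\otimes T_i+\sum\mu^\beta_j\overline\omega^j\otimes W_\beta+\sum\mu^\beta_\alpha\overline\omega^\alpha\otimes W_\beta$, elements of $\mathfrak g^{*(0,1)}\otimes\mathfrak g^{1,0}$ being regarded as linear maps $\mathfrak g^{0,1}\to\mathfrak g^{1,0}$. $\overline\partial$: $\overline\partial V=\sum_p\overline\omega^p\otimes[\overline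 e_p,V]^{1,0}$ for $V\in\mathfrak g^{1,0}$, $\overline\partial\overline\sigma=(d\overline\sigma)^{(0,2)}$, $\overline\partial(\overline\sigma\otimes V)=\overline\partial\overline\sigma\otimes V-\overline\sigma\wedge\overline\partial V$. Condition A: $\sum_i(\mu^i_jF^\alpha_{ki}-\mu^i_kF^\alpha_{ji})=0$ and $\sum_i\mu^i_\alpha F^\beta_{ji}=0$ for all $j,k,\alpha,\beta$. ''$\mu$ generates an abelian deformation'' means: there is a power series $\Phi(t)=\sum_{r\ge1}t^r\phi_r$ with $\phi_r\in\mathfrak g^{*(0,1)}\otimes\mathfrak g^{1,0}$, $\phi_1=\mu$, convergent for small real $t$, such that for all small $t$ the vectors $\overline S_j=\overline T_j+\Phi(t)\overline T_j$ and $\overline V_\alpha=\overline W_\alpha+\Phi(t)\overline W_\alpha$ satisfy $[\overline S_j,\overline S_k]=0$, $[\overline S_j,\overline V_\alpha]=0$, $[\overline V_\alpha,\overline V_\beta]=0$ (so they span the $(0,1)$-space of an abelian invariant complex structure). *)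

(* Defs.v *)
From HB Require Import structures.
From mathcomp Require Import all_boot all_order all_algebra.
From mathcomp Require Import all_classical all_reals all_analysis.
From mathcomp Require Import complex.
Set Implicit Arguments. Unset Strict Implicit. Unset Printing Implicit Defensive.
Import Order.TTheory GRing.Theory Num.Theory.
Local Open Scope classical_set_scope.
Local Open Scope ring_scope.

(* The complexified Lie algebra g_C = g^{1,0} (+) g^{0,1}.  The basis of      *)
(* g^{1,0} is indexed by p : 'I_(n+m):  p = lshift m j  stands for T_j        *)
(* (j : 'I_n) and p = rshift n a stands for W_a (a : 'I_m).  The basis of     *)
(* g^{0,1} is the conjugate basis (Tbar_j, Wbar_a), indexed the same way.    *)
(* An element of g_C is a pair (x10, x01) of coordinate row vectors.          *)

Section Setting.
Variable R : realType.
Local Notation C := (R[i]).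
Variables n m : nat.

Definition gC := ('rV[C]_(n + m) * 'rV[C]_(n + m))%type.

Definition e10 (p : 'I_(n + m)) : gC := (delta_mx 0 p, 0).
Definition e01 (p : 'I_(n + m)) : gC := (0, delta_mx 0 p).

(* Structure constants: E a k j = E^a_{kj}; F^a_{kj} = - conj(E^a_{jk}). *)
Definition Fc (E : 'I_m -> 'M[C]_n) (a : 'I_m) (k j : 'I_n) : C :=
  - conjc (E a j k).

(* The Lie bracket of g_C determined by E: the only nonzero brackets of basis
   vectors are  [Tbar_k, T_j] = sum_a E^a_{kj} W_a + sum_a F^a_{kj} Wbar_a
   and  [T_j, Tbar_k] = - [Tbar_k, T_j]  (J abelian: [T_j,T_k] = 0 =
   [Tbar_j,Tbar_k]; the center c_C = span(W, Wbar)), extended bilinearly. *)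
Definition brk (E : 'I_m -> 'M[C]_n) (X Y : gC) : gC :=
  let s k j :=
    X.2 0 (lshift m k) * Y.1 0 (lshift m j)
    - X.1 0 (lshift m j) * Y.2 0 (lshift m k) in
  (\row_(p < n + m) match fintype.split p with
                    | inl _ => 0
                    | inr a => \sum_(k < n) \sum_(j < n) s k j * E a k j
                    end,
   \row_(p < n + m) match fintype.split p with
                    | inl _ => 0
                    | inr a => \sum_(k < n) \sum_(j < n) s k j * Fc E a k j
                    end).

(* "c is the center of g": no nonzero real element
   v = sum_j (z_j T_j + conj(z_j) Tbar_j) of the complement t is central. *)
Definition center_is_c (E : 'I_m -> 'M[C]_n) : Prop :=
  forall z : 'rV[C]_n,
    (forall Y : gC,
        brk E (\row_(p < n + m) match fintype.split p with
                                | inl j => z 0 j | inr _ => 0 end,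
               \row_(p < n + m) match fintype.split p with
                                | inl j => conjc (z 0 j) | inr _ => 0 end) Y
        = (0, 0)) ->
    z = 0.

(* Elements of g^{*(0,1)} (x) g^{1,0}, regarded as linear maps
   g^{0,1} -> g^{1,0}: a matrix M with  M i p = mu^i_p, i.e.
   mu(ebar_p) = sum_i M i p e_i.  So mu^i_j = M (lshift i) (lshift j),
   mu^i_a = M (lshift i) (rshift a), mu^b_j = M (rshift b) (lshift j),
   mu^b_a = M (rshift b) (rshift a). *)
Definition apply01 (M : 'M[C]_(n + m)) (p : 'I_(n + m)) : 'rV[C]_(n + m) :=
  \row_(i < n + m) M i p.

(* A (0,1)-form sigma is given by its values sigma p = sigma(ebar_p) (it
   vanishes on g^{1,0}).  A (0,1)-form with values in g^{1,0} is given by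
   psi : 'I_(n+m) -> 'rV_(n+m) (psi p = value on ebar_p).  A (0,2)-form
   (scalar or g^{1,0}-valued) is given by its values on pairs of basis
   vectors (ebar_a, ebar_b). *)

Definition omb (p : 'I_(n + m)) : 'I_(n + m) -> C :=
  fun q => (p == q)%:R.

Definition form01_eval (sigma : 'I_(n + m) -> C) (X : gC) : C :=
  \sum_(q < n + m) sigma q * X.2 0 q.

(* d sigma (X,Y) = - sigma([X,Y]) for invariant forms; dbar sigma = (d sigma)^{(0,2)} *)
Definition dbar_form (E : 'I_m -> 'M[C]_n) (sigma : 'I_(n + m) -> C)
  : 'I_(n + m) -> 'I_(n + m) -> C :=
  fun a b => - form01_eval sigma (brk E (e01 a) (e01 b)).

(* dbar V = sum_p omegabar^p (x) [ebar_p, V]^{1,0}  for V in g^{1,0} *)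
Definition dbar_vec (E : 'I_m -> 'M[C]_n) (V : 'rV[C]_(n + m))
  : 'I_(n + m) -> 'rV[C]_(n + m) :=
  fun p => (brk E (e01 p) (V, 0)).1.

Definition wedge1 (sigma : 'I_(n + m) -> C) (psi : 'I_(n + m) -> 'rV[C]_(n + m))
  : 'I_(n + m) -> 'I_(n + m) -> 'rV[C]_(n + m) :=
  fun a b => sigma a *: psi b - sigma b *: psi a.

(* dbar mu, using mu = sum_p omegabar^p (x) mu(ebar_p) and
   dbar(sigma (x) V) = dbar sigma (x) V - sigma ^ dbar V. *)
Definition dbar_mu (E : 'I_m -> 'M[C]_n) (M : 'M[C]_(n + m))
  : 'I_(n + m) -> 'I_(n + m) -> 'rV[C]_(n + m) :=
  fun a b => \sum_(p < n + m)
     (dbar_form E (omb p) a b *: apply01 M p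
      - wedge1 (omb p) (dbar_vec E (apply01 M p)) a b).

Definition dbar_closed (E : 'I_m -> 'M[C]_n) (M : 'M[C]_(n + m)) : Prop :=
  forall a b, dbar_mu E M a b = 0.

Definition conditionA (E : 'I_m -> 'M[C]_n) (M : 'M[C]_(n + m)) : Prop :=
  (forall (j k : 'I_n) (a : 'I_m),
      \sum_(i < n) (M (lshift m i) (lshift m j) * Fc E a k i
                    - M (lshift m i) (lshift m k) * Fc E a j i) = 0)
  /\ (forall (j : 'I_n) (a b : 'I_m),
      \sum_(i < n) M (lshift m i) (rshift n a) * Fc E b j i = 0).

(* The (0,1)-vectors ebar_p + Phi(ebar_p), i.e. Sbar_j and Vbar_a. *)
Definition defvec (Phi : 'M[C]_(n + m)) (p : 'I_(n + m)) : gC :=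
  (apply01 Phi p, delta_mx 0 p).

Definition abelian_def (E : 'I_m -> 'M[C]_n) (Phi : 'M[C]_(n + m)) : Prop :=
  forall p q, brk E (defvec Phi p) (defvec Phi q) = (0, 0).

Definition cvgC (u : nat -> C) (l : C) : Prop :=
  ((fun N : nat => (complex.Re (u N) : R^o)) @ \oo --> (complex.Re l : R^o))
  /\ ((fun N : nat => (complex.Im (u N) : R^o)) @ \oo --> (complex.Im l : R^o)).

Definition series_at (phi : nat -> 'M[C]_(n + m)) (t : R) (P : 'M[C]_(n + m))
  : Prop :=
  forall i p, cvgC (fun N => \sum_(1 <= r < N) ((t ^+ r)%:C * phi r i p)%C) (P i p).

Definition generates_abelian_deformation (E : 'I_m -> 'M[C]_n)
    (M : 'M[C]_(n + m)) : Prop :=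
  exists phi : nat -> 'M[C]_(n + m),
    phi 1%N = M /\
    exists delta : R, 0 < delta /\
      forall t : R, `|t| < delta ->
        exists P : 'M[C]_(n + m), series_at phi t P /\ abelian_def E P.

End Setting.

(* Main.v *)
Require Import Defs.
From HB Require Import structures.
From mathcomp Require Import all_boot all_order all_algebra.
From mathcomp Require Import all_classical all_reals all_analysis.
From mathcomp Require Import complex ring lra.
Import Order.TTheory GRing.Theory Num.Theory.
Set Implicit Arguments. Unset Strict Implicit. Unset Printing Implicit Defensive.
Local Open Scope classical_set_scope.
Local Open Scope ring_scope.
Lemma ev_ex (P : nat -> Prop) : (\forall N \near \oo, P N) -> exists N0, forall N, (N0 <= N)%N -> P N.
Proof. case=> N0 _ H. exists N0 => N HN. exact: H. Qed.

Lemma cvg0_ex (R : realType) (u : nat -> R^o) (e : R) : u @ \oo --> (0:R^o) -> 0 < e ->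
  exists N0, forall N, (N0 <= N)%N -> `|u N| < e.
Proof.
move=> /cvgr_dist_lt H he; apply: ev_ex; near=> N.
rewrite -normrN -(add0r (- u N)). near: N. exact: H.
Unshelve. all: end_near.
Qed.

Lemma series_id (R : realType) (a : nat -> R) (d : R) : 0 < d ->
  (forall t : R, `|t| < d -> (fun N => \sum_(1 <= r < N) t ^+ r * a r) @ \oo --> (0:R^o)) ->
  a 1%N = 0.
Proof.
move=> dpos Hc.
set t0 := d / 2.
have t0pos : 0 < t0 by rewrite /t0 divr_gt0.
have t0d : `|t0| < d by rewrite gtr0_norm // /t0; lra.
have [N0 HN0] := cvg0_ex (Hc t0 t0d) (ltr01 : (0:R) < 1).
set B := 2 + \sum_(r < N0.+1) `|t0 ^+ r * a r|.
have HB : forall r, `|t0 ^+ r * a r| <= B.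
  move=> r; case: (leqP r N0) => hr.
    rewrite /B (bigD1 (Ordinal (hr : (r < N0.+1)%N))) //=.
    have : 0 <= \sum_(i < N0.+1 | i != Ordinal (hr : (r < N0.+1)%N)) `|t0 ^+ i * a i|.
      by apply: sumr_ge0 => i _.
    lra.
  have h1 : (1 <= r)%N by apply: leq_ltn_trans hr.
  have e : t0 ^+ r * a r = \sum_(1 <= k < r.+1) t0 ^+ k * a k - \sum_(1 <= k < r) t0 ^+ k * a k.
    by rewrite big_nat_recr //= addrAC subrr add0r.
  rewrite e.
  have := HN0 r.+1 (leqW (ltnW hr)); have := HN0 r (ltnW hr).

  have : 0 <= \sum_(r < N0.+1) `|t0 ^+ r * a r| by apply: sumr_ge0.
  move=> h0 ha hb. rewrite /B.
  apply: le_trans (ler_normB _ _) _. lra.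
have Bpos : 0 < B.
  rewrite /B; have : 0 <= \sum_(r < N0.+1) `|t0 ^+ r * a r| by apply: sumr_ge0. lra.
have est : forall t, 0 < t -> t <= t0 / 2 -> forall k,
    `|\sum_(1 <= r < k.+2) t ^+ r * a r - t * a 1%N| <= 2 * B * (t / t0) ^+ 2 - 2 * B * (t / t0) ^+ k.+2.
  move=> t tpos tle; set x := t / t0.
  have xpos : 0 < x by rewrite /x divr_gt0.
  have xle : x <= 1/2.
    rewrite /x ler_pdivrMr //; lra.
  elim=> [|k IH].
    rewrite big_nat1 expr1 subrr normr0; lra.
  rewrite big_nat_recr //= addrAC.
  apply: le_trans (ler_normD _ _) _.
  have tx : t = x * t0 by rewrite /x divfK // gt_eqF.
  have hterm : `|t ^+ k.+2 * a k.+2| <= B * x ^+ k.+2.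
    rewrite tx exprMn -mulrA normrM (ger0_norm (exprn_ge0 _ (ltW xpos))) mulrC.
    apply: ler_wpM2r; [exact: exprn_ge0 (ltW xpos) | exact: HB].
  have hy : 0 <= x ^+ k.+2 by rewrite exprn_ge0 ?ltW.
  have hxs : x ^+ k.+3 = x * x ^+ k.+2 by rewrite exprS.
  rewrite hxs.
  have : B * x ^+ k.+2 * (1 - 2 * x) >= 0.
    by apply: mulr_ge0; [apply: mulr_ge0; [exact: ltW Bpos | exact: hy] | lra].
  move: IH hterm; set y := x ^+ k.+2; set A := `|_ - _|; set b := `|_ * _|.
  move=> IH hterm hf.
  have : B * y * (1 - 2 * x) = B * y - 2 * (B * (x * y)) by ring.
  lra.
apply/eqP; apply/negPn/negP => ha.
have hapos : 0 < `|a 1%N| by rewrite normr_gt0.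
set t := Num.min (t0 / 2) (`|a 1%N| * t0 ^+ 2 / (8 * B)).
have tpos : 0 < t by rewrite /t lt_min !divr_gt0 ?mulr_gt0 ?exprn_gt0 //; lra.
have tle : t <= t0 / 2 by rewrite /t ge_min lexx.
have tle2 : t <= `|a 1%N| * t0 ^+ 2 / (8 * B) by rewrite /t ge_min lexx orbT.
have ttd : `|t| < d by rewrite gtr0_norm //; move: tle; rewrite /t0; lra.
have e2 : 0 < t * `|a 1%N| / 2 by rewrite divr_gt0 ?mulr_gt0.
have [N1 HN1] := cvg0_ex (Hc t ttd) e2.
have := HN1 (maxn N1 2).+2 (leq_trans (leq_maxl _ _) (leqW (leqnSn _))).
have := est t tpos tle (maxn N1 2).
set S := \sum_(1 <= r < _) _.
have hx2 : 2 * B * (t / t0) ^+ 2 <= t * `|a 1%N| / 4.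
  have -> : 2 * B * (t / t0) ^+ 2 = t * (2 * B * t / t0 ^+ 2).
    by field; rewrite gt_eqF.
  have : 2 * B * t / t0 ^+ 2 <= `|a 1%N| / 4.
    rewrite ler_pdivrMr ?exprn_gt0 //.
    have : t * (8 * B) <= `|a 1%N| * t0 ^+ 2 by rewrite -ler_pdivlMr ?mulr_gt0 //; lra.
    lra.
  move=> h; have := ler_wpM2l (ltW tpos) h. lra.
have hxk : 0 <= 2 * B * (t / t0) ^+ (maxn N1 2).+2.
  by rewrite mulr_ge0 ?exprn_ge0 ?divr_ge0 ?ltW //; lra.
move=> h1 h2.
have h3 := ler_normD (t * a 1%N - S) S; rewrite subrK distrC in h3.
rewrite normrM gtr0_norm // in h3.
have : 0 < t * `|a 1%N| by rewrite mulr_gt0.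
lra.
Unshelve. all: end_near.
Qed.
Local Notation Re := complex.Re.
Local Notation Im := complex.Im.
Section Aux.
Variable R : realType.
Local Notation C := (R[i]).

Lemma ReD (x y : C) : Re (x + y) = Re x + Re y. Proof. by case: x => ? ?; case: y => ? ? /=. Qed.
Lemma ImD (x y : C) : Im (x + y) = Im x + Im y. Proof. by case: x => ? ?; case: y => ? ? /=. Qed.
Lemma ReB (x y : C) : Re (x - y) = Re x - Re y. Proof. by case: x => ? ?; case: y => ? ? /=. Qed.
Lemma ImB (x y : C) : Im (x - y) = Im x - Im y. Proof. by case: x => ? ?; case: y => ? ? /=. Qed.
Lemma ReM (x y : C) : Re (x * y) = Re x * Re y - Im x * Im y. Proof. by case: x => ? ?; case: y => ? ? /=. Qed.
Lemma ImM (x y : C) : Im (x * y) = Re x * Im y + Im x * Re y. Proof. by case: x => ? ?; case: y => ? ? /=. Qed.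
Lemma ReMC (r : R) (x : C) : Re ((r%:C)%C * x) = r * Re x.
Proof. by case: x => a b /=; rewrite mul0r subr0. Qed.
Lemma ImMC (r : R) (x : C) : Im ((r%:C)%C * x) = r * Im x.
Proof. by case: x => a b /=; rewrite mul0r addr0. Qed.
Lemma Re0 : Re (0 : C) = 0. Proof. by []. Qed.
Lemma Im0 : Im (0 : C) = 0. Proof. by []. Qed.

Lemma cvgC_sub (u v : nat -> C) a b : cvgC u a -> cvgC v b ->
  cvgC (fun N => u N - v N) (a - b).
Proof.
move=> [h1 h2] [h3 h4]; split.
  under eq_fun do rewrite ReB. rewrite ReB. exact: cvgB.
under eq_fun do rewrite ImB. rewrite ImB. exact: cvgB.
Qed.

Lemma cvgC_add (u v : nat -> C) a b : cvgC u a -> cvgC v b ->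
  cvgC (fun N => u N + v N) (a + b).
Proof.
move=> [h1 h2] [h3 h4]; split.
  under eq_fun do rewrite ReD. rewrite ReD. exact: cvgD.
under eq_fun do rewrite ImD. rewrite ImD. exact: cvgD.
Qed.

Lemma cvgC_mull (c : C) (u : nat -> C) a : cvgC u a ->
  cvgC (fun N => c * u N) (c * a).
Proof.
move=> [h1 h2]; split.
  under eq_fun do rewrite ReM. rewrite ReM.
  apply: cvgB; [exact: cvgMl_tmp | exact: cvgMl_tmp].
under eq_fun do rewrite ImM. rewrite ImM.
apply: cvgD; [exact: cvgMl_tmp | exact: cvgMl_tmp].
Qed.

Lemma cvgC_cst (c : C) : cvgC (fun _ => c) c.
Proof. split; exact: cvg_cst. Qed.

Lemma cvgC_sum k (u : nat -> 'I_k -> C) a : (forall i, cvgC (fun N => u N i) (a i)) ->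
  cvgC (fun N => \sum_(i < k) u N i) (\sum_(i < k) a i).
Proof.
elim: k u a => [|k IH] u a h.
  under eq_fun do rewrite big_ord0. rewrite big_ord0. exact: cvgC_cst.
under eq_fun do rewrite big_ord_recr /=. rewrite big_ord_recr /=.
apply: cvgC_add; last exact: h.
exact: (IH (fun N i => u N (widen_ord (leqnSn k) i))).
Qed.

End Aux.

Section Q.
Variable R : realType.
Local Notation C := (R[i]).
Variables n m : nat.
Variable E : 'I_m -> 'M[C]_n.

Definition Qf (G : 'I_n -> 'I_n -> C) (p q : 'I_(n + m))
  (X : 'I_(n + m) -> 'I_(n + m) -> C) : C :=
  \sum_(k < n) \sum_(j < n)
     ((delta_mx 0 p : 'rV[C]_(n + m)) 0 (lshift m k) * G k j) * X (lshift m j) q.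

Lemma split_l (k : 'I_n) : fintype.split (lshift m k) = inl k.
Proof. exact: (unsplitK (inl k : 'I_n + 'I_m)). Qed.
Lemma split_r (x : 'I_m) : fintype.split (rshift n x) = inr x.
Proof. exact: (unsplitK (inr x : 'I_n + 'I_m)). Qed.

Lemma delta_l (k k0 : 'I_n) :
  (delta_mx 0 (lshift m k0) : 'rV[C]_(n + m)) 0 (lshift m k) = (k == k0)%:R.
Proof. by rewrite mxE eqxx /= (inj_eq (@lshift_inj _ _)). Qed.
Lemma delta_r (k : 'I_n) (x : 'I_m) :
  (delta_mx 0 (rshift n x) : 'rV[C]_(n + m)) 0 (lshift m k) = 0.
Proof. by rewrite mxE eqxx /= eq_lrshift. Qed.

Lemma Qf_l G k0 q X : Qf G (lshift m k0) q X = \sum_(j < n) G k0 j * X (lshift m j) q.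
Proof.
rewrite /Qf (bigD1 k0) //= [X in _ + X]big1 ?addr0 => [|k hk].
  by apply: eq_bigr => j _; rewrite delta_l eqxx mul1r.
by rewrite big1 // => j _; rewrite delta_l (negPf hk) !mul0r.
Qed.

Lemma Qf_r G x q X : Qf G (rshift n x) q X = 0.
Proof. by rewrite /Qf big1 // => k _; rewrite big1 // => j _; rewrite delta_r !mul0r. Qed.

Lemma brk1 (P : 'M[C]_(n + m)) p q i :
  (brk E (defvec P p) (defvec P q)).1 0 i =
  match fintype.split i with inl _ => 0
  | inr x => Qf (fun k j => E x k j) p q (fun a b => P a b)
             - Qf (fun k j => E x k j) q p (fun a b => P a b) end.
Proof.
rewrite /brk /= mxE; case: (fintype.split i) => // x.
rewrite /Qf -sumrB; apply: eq_bigr => k _; rewrite -sumrB; apply: eq_bigr => j _.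
rewrite /defvec /apply01 /= [(\row__ _) _ _]mxE [(\row__ _) _ _]mxE; ring.
Qed.

Lemma brk2 (P : 'M[C]_(n + m)) p q i :
  (brk E (defvec P p) (defvec P q)).2 0 i =
  match fintype.split i with inl _ => 0
  | inr x => Qf (Fc E x) p q (fun a b => P a b)
             - Qf (Fc E x) q p (fun a b => P a b) end.
Proof.
rewrite /brk /= mxE; case: (fintype.split i) => // x.
rewrite /Qf -sumrB; apply: eq_bigr => k _; rewrite -sumrB; apply: eq_bigr => j _.
rewrite /defvec /apply01 /= [(\row__ _) _ _]mxE [(\row__ _) _ _]mxE; ring.
Qed.

Definition SymE (X : 'I_(n + m) -> 'I_(n + m) -> C) :=
  forall p q x, Qf (fun k j => E x k j) p q X = Qf (fun k j => E x k j) q p X.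
Definition SymF (X : 'I_(n + m) -> 'I_(n + m) -> C) :=
  forall p q x, Qf (Fc E x) p q X = Qf (Fc E x) q p X.

Lemma abelian_Sym P : abelian_def E P <-> (SymE (fun a b => P a b) /\ SymF (fun a b => P a b)).
Proof.
split.
  move=> h; split=> p q x; have := h p q; move=> [] /rowP /(_ (rshift n x)).
    by rewrite brk1 split_r mxE => /eqP; rewrite subr_eq0 => /eqP.
  by move=> _ /rowP /(_ (rshift n x)); rewrite brk2 split_r mxE => /eqP; rewrite subr_eq0 => /eqP.
move=> [h1 h2] p q.
rewrite [brk _ _ _]surjective_pairing; congr pair; apply/rowP => i;
  rewrite ?brk1 ?brk2 mxE; case: (fintype.split i) => // x.
  by rewrite h1 subrr.
by rewrite h2 subrr.
Qed.

End Q.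

Section D.
Variable R : realType.
Local Notation C := (R[i]).
Variables n m : nat.
Variable E : 'I_m -> 'M[C]_n.

Lemma dbar_form0 (s : 'I_(n + m) -> C) a b : dbar_form E s a b = 0.
Proof.
rewrite /dbar_form /form01_eval big1 ?oppr0 // => q _.
rewrite /brk /= mxE; case: (fintype.split q) => [_|x]; first by rewrite mulr0.
rewrite big1 ?mulr0 // => k _; rewrite big1 // => j _.
by rewrite /e01 /= !mxE; ring.
Qed.

Lemma sum_omb (f : 'I_(n + m) -> 'rV[C]_(n + m)) a :
  \sum_(p < n + m) omb R p a *: f p = f a.
Proof.
rewrite (bigD1 a) //= big1 ?addr0 => [|p hp]; first by rewrite /omb eqxx scale1r.
by rewrite /omb (negPf hp) scale0r.
Qed.

Lemma dbar_mu_eq (M : 'M[C]_(n + m)) a b :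
  dbar_mu E M a b = - (dbar_vec E (apply01 M a) b - dbar_vec E (apply01 M b) a).
Proof.
rewrite /dbar_mu.
under eq_bigr do rewrite dbar_form0 scale0r sub0r.
rewrite sumrN /wedge1 sumrB.
by rewrite (sum_omb (fun p => dbar_vec E (apply01 M p) b))
           (sum_omb (fun p => dbar_vec E (apply01 M p) a)).
Qed.

Lemma dbar_vec_entry (M : 'M[C]_(n + m)) a b i :
  (dbar_vec E (apply01 M a) b) 0 i =
  match fintype.split i with inl _ => 0
  | inr x => Qf (fun k j => E x k j) b a (fun u v => M u v) end.
Proof.
rewrite /dbar_vec /brk /= mxE; case: (fintype.split i) => // x.
rewrite /Qf; apply: eq_bigr => k _; apply: eq_bigr => j _.
rewrite /e01 /apply01 /= [(\row__ _) _ _]mxE [(0 : 'rV_ _) _ _]mxE [(0 : 'rV_ _) _ _]mxE; ring.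
Qed.

Lemma dbar_mu_entry (M : 'M[C]_(n + m)) a b i :
  (dbar_mu E M a b) 0 i =
  match fintype.split i with inl _ => 0
  | inr x => - (Qf (fun k j => E x k j) b a (fun u v => M u v)
              - Qf (fun k j => E x k j) a b (fun u v => M u v)) end.
Proof.
rewrite dbar_mu_eq.
have e : forall (A B : 'rV[C]_(n + m)) j, (- (A - B)) 0 j = - (A 0 j - B 0 j).
  by move=> A B j; rewrite !mxE.
rewrite e !dbar_vec_entry.
by case: (fintype.split i) => [_|x]; rewrite ?subrr ?oppr0.
Qed.

Lemma dbar_SymE (M : 'M[C]_(n + m)) : dbar_closed E M <-> SymE E (fun u v => M u v).
Proof.
split.
  move=> h p q x; have /rowP /(_ (rshift n x)) := h q p.
  rewrite dbar_mu_entry split_r mxE => /eqP.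
  by rewrite oppr_eq0 subr_eq0 => /eqP.
move=> h a b; apply/rowP => i.
rewrite dbar_mu_entry mxE; case: (fintype.split i) => [_|x] //.
by rewrite h subrr oppr0.
Qed.

Lemma condA_SymF (M : 'M[C]_(n + m)) : conditionA E M <-> SymF E (fun u v => M u v).
Proof.
split.
  move=> [h1 h2] p q x.
  rewrite -[p]splitK -[q]splitK.
  case: (fintype.split p) => [k|a]; case: (fintype.split q) => [j|b] /=;
    rewrite ?Qf_l ?Qf_r //.
  - have := h1 j k x; rewrite sumrB => /eqP; rewrite subr_eq0 => /eqP e.
    transitivity (\sum_(i < n) M (lshift m i) (lshift m j) * Fc E x k i).
      by apply: eq_bigr => i _; rewrite mulrC.
    rewrite e; apply: eq_bigr => i _; by rewrite mulrC.
  - rewrite -[RHS](h2 k b x); apply: eq_bigr => i _; by rewrite mulrC.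
  - rewrite -[LHS](h2 j a x); apply: eq_bigr => i _; by rewrite mulrC.
move=> h; split.
  move=> j k a; have := h (lshift m k) (lshift m j) a; rewrite !Qf_l => e.
  rewrite sumrB; apply/eqP; rewrite subr_eq0; apply/eqP.
  transitivity (\sum_(i < n) Fc E a k i * M (lshift m i) (lshift m j)).
    by apply: eq_bigr => i _; rewrite mulrC.
  rewrite e; apply: eq_bigr => i _; by rewrite mulrC.
move=> j a b; have := h (lshift m j) (rshift n a) b; rewrite Qf_l Qf_r => e.
rewrite -[RHS]e; by apply: eq_bigr => i _; rewrite mulrC.
Qed.

End D.

Section Main.
Variable R : realType.
Local Notation C := (R[i]).
Variables n m : nat.

Lemma Qf_scale (G : 'I_n -> 'I_n -> C) p q (c : C) (X : 'I_(n + m) -> 'I_(n + m) -> C) :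
  Qf G p q (fun a b => c * X a b) = c * Qf G p q X.
Proof.
rewrite /Qf mulr_sumr; apply: eq_bigr => k _; rewrite mulr_sumr; apply: eq_bigr => j _.
by ring.
Qed.

Lemma Qf_psum (G : 'I_n -> 'I_n -> C) p q N (c : nat -> C)
  (Y : nat -> 'I_(n + m) -> 'I_(n + m) -> C) :
  Qf G p q (fun a b => \sum_(1 <= r < N) c r * Y r a b)
  = \sum_(1 <= r < N) c r * Qf G p q (Y r).
Proof.
symmetry; rewrite /Qf.
under eq_bigr do rewrite mulr_sumr.
rewrite exchange_big; apply: eq_bigr => k _.
under eq_bigr do rewrite mulr_sumr.
rewrite exchange_big; apply: eq_bigr => j _.
rewrite mulr_sumr; apply: eq_bigr => r _; by ring.
Qed.

Lemma cvgC_Qf (G : 'I_n -> 'I_n -> C) p q (X : nat -> 'I_(n + m) -> 'I_(n + m) -> C) Y :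
  (forall a b, cvgC (fun N => X N a b) (Y a b)) ->
  cvgC (fun N => Qf G p q (X N)) (Qf G p q Y).
Proof.
move=> h; rewrite /Qf; apply: cvgC_sum => k; apply: cvgC_sum => j; exact: cvgC_mull.
Qed.

Lemma Re_sum N (f : nat -> C) : Re (\sum_(1 <= r < N) f r) = \sum_(1 <= r < N) Re (f r).
Proof. exact: (big_morph _ (@ReD R) (@Re0 R)). Qed.
Lemma Im_sum N (f : nat -> C) : Im (\sum_(1 <= r < N) f r) = \sum_(1 <= r < N) Im (f r).
Proof. exact: (big_morph _ (@ImD R) (@Im0 R)). Qed.

Lemma forward_gen (phi : nat -> 'M[C]_(n + m)) (d : R) (G : 'I_n -> 'I_n -> C) p q :
  0 < d ->
  (forall t : R, `|t| < d -> exists P : 'M[C]_(n + m), series_at phi t P /\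
      Qf G p q (fun a b => P a b) = Qf G q p (fun a b => P a b)) ->
  Qf G p q (fun a b => phi 1%N a b) = Qf G q p (fun a b => phi 1%N a b).
Proof.
move=> dpos H.
set z := fun r => Qf G p q (fun a b => phi r a b) - Qf G q p (fun a b => phi r a b).
have key : forall t : R, `|t| < d ->
    cvgC (fun N => \sum_(1 <= r < N) ((t ^+ r)%:C)%C * z r) 0.
  move=> t ht; have [P [hs hP]] := H t ht.
  have := cvgC_sub (cvgC_Qf G p q hs) (cvgC_Qf G q p hs).
  rewrite hP subrr.
  suff -> : (fun N => \sum_(1 <= r < N) ((t ^+ r)%:C)%C * z r) =
     (fun N => Qf G p q (fun a b => \sum_(1 <= r < N) ((t ^+ r)%:C * phi r a b)%C)
             - Qf G q p (fun a b => \sum_(1 <= r < N) ((t ^+ r)%:C * phi r a b)%C)) by [].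
  apply: funext => N; rewrite !Qf_psum -sumrB; apply: eq_bigr => r _.
  by rewrite /z mulrBr.
have hRe : Re (z 1%N) = 0.
  apply: (@series_id R (fun r => Re (z r)) d dpos) => t ht.
  have [h _] := key t ht.
  suff <- : (fun N => Re (\sum_(1 <= r < N) ((t ^+ r)%:C)%C * z r) : R^o) =
            (fun N => (\sum_(1 <= r < N) t ^+ r * Re (z r) : R^o)) by exact: h.
  apply: funext => N; rewrite Re_sum; apply: eq_bigr => r _; exact: ReMC.
have hIm : Im (z 1%N) = 0.
  apply: (@series_id R (fun r => Im (z r)) d dpos) => t ht.
  have [_ h] := key t ht.
  suff <- : (fun N => Im (\sum_(1 <= r < N) ((t ^+ r)%:C)%C * z r) : R^o) =
            (fun N => (\sum_(1 <= r < N) t ^+ r * Im (z r) : R^o)) by exact: h.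
  apply: funext => N; rewrite Im_sum; apply: eq_bigr => r _; exact: ImMC.
apply/eqP; rewrite -subr_eq0; apply/eqP.
rewrite -/(z 1%N); move: (z 1%N) hRe hIm => [a b] /= -> ->; by [].
Qed.

End Main.

Unset Implicit Arguments.

Theorem theorem5p3 (R : realType) (n m : nat) (E : 'I_m -> 'M[R[i]]_n)
    (hn : (0 < n)%N) (hcenter : center_is_c E) (M : 'M[R[i]]_(n + m)) :
  generates_abelian_deformation E M <-> (dbar_closed E M /\ conditionA E M).
Proof.
split.
  move=> [phi [ph1 [d [dpos H]]]].
  have hS : SymE E (fun u v => M u v) /\ SymF E (fun u v => M u v).
    split => p q x; rewrite -ph1.
      apply: (@forward_gen R n m phi d (fun k j => E x k j) p q dpos) => t ht.
      have [P [hs hab]] := H t ht; exists P; split; first exact: hs.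
      by have [h1 h2] := (abelian_Sym E P).1 hab; exact: (h1 p q x).
    apply: (@forward_gen R n m phi d (Fc E x) p q dpos) => t ht.
    have [P [hs hab]] := H t ht; exists P; split; first exact: hs.
    by have [h1 h2] := (abelian_Sym E P).1 hab; exact: (h2 p q x).
  by case: hS => h1 h2; split; [apply/dbar_SymE | apply/condA_SymF].
move=> [hd hA].
have h1 := (dbar_SymE E M).1 hd; have h2 := (condA_SymF E M).1 hA.
exists (fun r => if r == 1%N then M else 0); split; first by [].
exists 1; split => // t _.
exists (((t%:C)%C) *: M); split.
  move=> i p.
  have e : forall N, (2 <= N)%N ->
      \sum_(1 <= r < N) (((t ^+ r)%:C)%C * (if r == 1%N then M else 0) i p)
      = (((t%:C)%C) *: M) i p.
    move=> N hN; rewrite big_ltn // eqxx expr1 [in RHS]mxE big_nat big1 ?addr0 //.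
    move=> r /andP [hr _]; have -> : (r == 1%N) = false by case: r hr => [|[|r]].
    by rewrite mxE mulr0.
  split; apply: cvg_near_cst; exists 2%N => // N /= hN; by rewrite e.
have eM : (fun a b => (((t%:C)%C) *: M) a b) = (fun a b => ((t%:C)%C) * M a b).
  by apply: funext => a; apply: funext => b; rewrite mxE.
apply/abelian_Sym; rewrite eM; split => p q x; rewrite !Qf_scale; [by rewrite (h1 p q x) | by rewrite (h2 p q x)].
Qed.
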